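(* Let $h=(I,E)$ be a hypergraph with $|I|=d$, and let $\chi_d(h)$ be the polynomial which agrees, for $m\in\mathbb{Z}_{>0}$, with the number of proper colorings of $h$ with $m$ colors. Then for every $m\in\mathbb{Z}_{>0}$, $$(-1)^d\chi_d(h)(-m)=\#\{(\varsigma,c):\ \varsigma\text{ an acyclic heading of }h,\ c:I\to[m]\text{ a coloring compatible with }\varsigma\}.$$ In particular, the number of acyclic headings of $h$ equals $(-1)^d\chi_d(h)(-1)$.
   Context: A hypergraph $h=(I,E)$ consists of a finite set $I$ of nodes and a finite multiset $E$ of nonempty subsets of $I$ (hyperedges). A coloring with $m$ colors is any map $c:I\to[m]=\{1,\dots,m\}$ (not necessarily proper); it is proper if every hyperedge $e$ contains exactly one node $i$ with $c(i)=\max_{j\in e}c(j)$. A heading is a map $\varsigma:E\to I$ with $\varsigma(e)\in e$ for every $e$. An oriented cycle in $\varsigma$ is a sequence of hyperedges $e_1,\dots,e_\ell$ with $\varsigma(e_j)\in e_{j+1}\setminus\{\varsigma(e_{j+1})\}$ for all $j$, indices modulo $\ell$; $\varsigma$ is acyclic if it has no oriented cycle. A coloring $c$ and a heading $\varsigma$ are compatible if $c(\varsigma(e))=\max_{j\in e}c(j)$ for every $e\in E$. *)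

(* Defs.v *)
(* Hypergraph h = (I, E): I a finType of nodes, E a finType
   indexing the hyperedges (so E is a multiset of subsets: distinct indices may
   carry the same subset), edge : E -> {set I}. *)
From HB Require Import structures.
From mathcomp Require Import all_boot all_order all_algebra.
From mathcomp Require Import boolp.
Set Implicit Arguments. Unset Strict Implicit. Unset Printing Implicit Defensive.
Import Order.TTheory GRing.Theory Num.Theory.

Section Hyper.
Variables (I E : finType) (edge : E -> {set I}).

(* Colors [m] = {1..m} are represented by 'I_m = {0..m-1} (order-isomorphic). *)
Definition emax (m : nat) (c : {ffun I -> 'I_m}) (e : E) : nat :=
  \max_(j in edge e) (c j : nat).

Definition proper_coloring (m : nat) (c : {ffun I -> 'I_m}) : bool :=
  [forall e : E, #|[set i in edge e | (c i : nat) == emax c e]| == 1].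

Definition heading (s : {ffun E -> I}) : Prop := forall e, s e \in edge e.

Definition oriented_cycle (s : {ffun E -> I}) (l : nat) (f : nat -> E) : Prop :=
  0 < l /\
  forall j, j < l -> s (f j) \in edge (f (j.+1 %% l)) :\ s (f (j.+1 %% l)).

Definition acyclic (s : {ffun E -> I}) : Prop :=
  ~ (exists l f, oriented_cycle s l f).

Definition compatible (m : nat) (c : {ffun I -> 'I_m}) (s : {ffun E -> I}) : Prop :=
  forall e, (c (s e) : nat) = emax c e.

Definition n_proper (m : nat) : nat := #|[set c : {ffun I -> 'I_m} | proper_coloring c]|.

Definition n_pairs (m : nat) : nat :=
  #|[set p : {ffun E -> I} * {ffun I -> 'I_m} |
      `[< heading p.1 /\ acyclic p.1 /\ compatible p.2 p.1 >] ]|.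

Definition n_acyclic_headings : nat :=
  #|[set s : {ffun E -> I} | `[< heading s /\ acyclic s >] ]|.
End Hyper.

(* Main.v *)
Require Import Defs.
From HB Require Import structures.
From mathcomp Require Import all_boot all_order all_algebra.
From mathcomp Require Import ring.
From mathcomp Require Import boolp.
Import Order.TTheory GRing.Theory Num.Theory.
Set Implicit Arguments. Unset Strict Implicit. Unset Printing Implicit Defensive.

Section PartA.
Local Open Scope ring_scope.

Definition binr (x : rat) (k : nat) : rat :=
  (k`!%:R)^-1 * \prod_(i < k) (x - i%:R).

Lemma binr0 x : binr x 0 = 1.
Proof. by rewrite /binr big_ord0 fact0 invr1 mulr1. Qed.

Lemma binr0S k : binr 0 k.+1 = 0.
Proof. by rewrite /binr big_ord_recl /= subrr mul0r mulr0. Qed.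

Lemma binr_pascal x k : binr (x + 1) k.+1 - binr x k.+1 = binr x k.
Proof.
rewrite /binr big_ord_recl big_ord_recr /=.
have -> : \prod_(i < k) (x + 1 - (bump 0 i)%:R) = \prod_(i < k) (x - i%:R).
  apply: eq_bigr => i _; rewrite /bump leq0n add1n -natr1; ring.
rewrite factS natrM.
have hk : (k.+1%:R : rat) != 0 by rewrite pnatr_eq0.
set P := \prod_(i < k) _.
rewrite subr0 -mulrBr.
have -> : (x + 1) * P - P * (x - k%:R) = k.+1%:R * P.
  by rewrite -natr1; ring.
have hf : (k`!%:R : rat) != 0 by rewrite pnatr_eq0 -lt0n fact_gt0.
by rewrite [k.+1%:R * _]mulrC invfM -mulrA mulKf.
Qed.

Definition ev (s : seq (rat * nat)) (x : rat) : rat := \sum_(p <- s) p.1 * binr x p.2.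

Lemma ev_cat s t x : ev (s ++ t) x = ev s x + ev t x.
Proof. by rewrite /ev big_cat. Qed.

Definition shift (s : seq (rat * nat)) := [seq (p.1, p.2.+1) | p <- s].

Lemma ev_shift s x : ev (shift s) (x + 1) - ev (shift s) x = ev s x.
Proof.
rewrite /ev !big_map -sumrB; apply: eq_bigr => p _ /=.
by rewrite -mulrBr binr_pascal.
Qed.

Lemma ev_shift0 s : ev (shift s) 0 = 0.
Proof. by rewrite /ev big_map big1 // => p _; rewrite binr0S mulr0. Qed.

Definition bpoly (k : nat) : {poly rat} :=
  (k`!%:R)^-1 *: \prod_(i < k) ('X - (i%:R)%:P).

Definition topoly (s : seq (rat * nat)) : {poly rat} := \sum_(p <- s) p.1 *: bpoly p.2.

Lemma topolyE s x : (topoly s).[x] = ev s x.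
Proof.
rewrite /topoly horner_sum; apply: eq_bigr => p _.
by rewrite hornerZ /bpoly hornerZ horner_prod; congr (_ * (_ * _));
  apply: eq_bigr => i _; rewrite hornerXsubC.
Qed.

End PartA.

Section PartB.

Lemma card_bij (T1 T2 : finType) (A : {set T1}) (B : {set T2})
  (f : T1 -> T2) (g : T2 -> T1) :
  {in A, forall x, f x \in B} -> {in B, forall y, g y \in A} ->
  {in A, cancel f g} -> {in B, cancel g f} -> #|A| = #|B|.
Proof.
move=> fA gB fK gK; apply/eqP; rewrite eqn_leq; apply/andP; split.
  rewrite -(@card_in_imset _ _ f A); last first.
    by move=> x y xA yA /(congr1 g); rewrite !fK.
  by apply: subset_leq_card; apply/subsetP => y /imsetP [x xA ->]; exact: fA.
rewrite -(@card_in_imset _ _ g B); last first.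
  by move=> x y xA yA /(congr1 f); rewrite !gK.
by apply: subset_leq_card; apply/subsetP => y /imsetP [x xA ->]; exact: gB.
Qed.

Section Count.
Variables (I : finType) (r : rel I) (K : nat).

Definition okc (V : {set I}) (m : nat) (c : {ffun I -> 'I_K}) : bool :=
  [forall i, ((0 < c i) == (i \in V)) && (c i <= m)].
Definition strictc (V : {set I}) (c : {ffun I -> 'I_K}) : bool :=
  [forall i, forall j, [&& i \in V, j \in V & r i j] ==> (c i < c j)].
Definition weakc (V : {set I}) (c : {ffun I -> 'I_K}) : bool :=
  [forall i, forall j, [&& i \in V, j \in V & r i j] ==> (c i <= c j)].
Definition St (V : {set I}) m := #|[set c | okc V m c && strictc V c]|.
Definition Wk (V : {set I}) m := #|[set c | okc V m c && weakc V c]|.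
Definition WkB (V : {set I}) (T : {set I}) m := #|[set c | [&& okc V m c, weakc V c & [forall t in T, c t < m]]]|.
Definition sinks (V : {set I}) := [set v in V | [forall w, (w \in V) ==> ~~ r v w]].

Lemma okcP (V : {set I}) m (c : {ffun I -> 'I_K}) : reflect ((forall i, (0 < c i) = (i \in V)) /\ (forall i, c i <= m)) (okc V m c).
Proof.
apply: (iffP forallP) => [H|[H1 H2] i]; last by rewrite H1 eqxx H2.
by split=> i; case/andP: (H i) => // /eqP.
Qed.

Lemma strictcP (V : {set I}) (c : {ffun I -> 'I_K}) : reflect (forall i j, i \in V -> j \in V -> r i j -> c i < c j) (strictc V c).
Proof.
apply: (iffP forallP) => [H i j iV jV rij|H i]; last first.
  by apply/forallP => j; apply/implyP => /and3P [iV jV rij]; exact: H.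
by move/forallP: (H i) => /(_ j) /implyP; apply; rewrite iV jV rij.
Qed.

Lemma weakcP (V : {set I}) (c : {ffun I -> 'I_K}) : reflect (forall i j, i \in V -> j \in V -> r i j -> c i <= c j) (weakc V c).
Proof.
apply: (iffP forallP) => [H i j iV jV rij|H i]; last first.
  by apply/forallP => j; apply/implyP => /and3P [iV jV rij]; exact: H.
by move/forallP: (H i) => /(_ j) /implyP; apply; rewrite iV jV rij.
Qed.

Lemma sinksP (V : {set I}) v : reflect (v \in V /\ forall w, w \in V -> ~~ r v w) (v \in sinks V).
Proof.
rewrite inE; apply: (iffP andP) => [[vV /forallP H]|[vV H]]; split => //.
  by move=> w wV; move/implyP: (H w); apply.
by apply/forallP => w; apply/implyP; exact: H.
Qed.

Lemma sinks_sub (V : {set I}) : sinks V \subset V.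
Proof. by apply/subsetP => v /sinksP []. Qed.

Lemma St_rec (V : {set I}) m : m.+1 < K ->
  St V m.+1 = \sum_(U : {set I} | U \subset sinks V) St (V :\: U) m.
Proof.
move=> hK.
have h0 : 0 < K by apply: leq_ltn_trans hK.
pose o0 := Ordinal h0. pose oM := Ordinal hK.
rewrite /St -sum1_card (partition_big (fun c : {ffun I -> 'I_K} => [set i | (c i : nat) == m.+1])
   (fun U : {set I} => U \subset sinks V)); last first.
  move=> c; rewrite inE => /andP [/okcP [H1 H2] /strictcP Hs].
  apply/subsetP => i; rewrite inE => /eqP ci; apply/sinksP.
  have iV : i \in V by rewrite -H1 ci.
  split => // w wV; apply/negP => riw.
  by have := Hs i w iV wV riw; rewrite ci ltnNge H2.
apply: eq_bigr => U /subsetP hU.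
rewrite sum1dep_card.
apply: (card_bij (f := fun c : {ffun I -> 'I_K} => [ffun i => if i \in U then o0 else c i])
                 (g := fun c : {ffun I -> 'I_K} => [ffun i => if i \in U then oM else c i])).
- move=> c; rewrite !inE => /andP [/andP [/okcP [H1 H2] /strictcP Hs] /eqP HU].
  apply/andP; split.
    apply/okcP; split => i; rewrite ffunE; case: ifP => iU.
    + by rewrite inE iU.
    + by rewrite inE iU H1.
    + by [].
    + have := H2 i; rewrite leq_eqVlt ltnS => /orP [] // /eqP ci.
      by move: iU; rewrite -HU inE ci eqxx.
  apply/strictcP => i j; rewrite !inE !ffunE => /andP [iU iV] /andP [jU jV].
  by rewrite (negPf iU) (negPf jU); exact: Hs.
- move=> c; rewrite !inE => /andP [/okcP [H1 H2] /strictcP Hs].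
  have sU i : i \in U -> i \in V /\ forall w, w \in V -> ~~ r i w by move/hU/sinksP.
  apply/andP; split; first (apply/andP; split).
  + apply/okcP; split => i; rewrite ffunE; case: ifP => iU //=.
    * by case: (sU i iU).
    * by rewrite H1 inE iU.
    * exact: leqW.
  + apply/strictcP => i j iV jV rij; rewrite !ffunE.
    case: ifP => iU; first by case: (sU i iU) => _ /(_ j jV); rewrite rij.
    have iV' : i \in V :\: U by rewrite inE iU.
    case: ifP => jU /=; first by rewrite ltnS H2.
    by apply: Hs => //; rewrite inE jU.
  + apply/eqP/setP => i; rewrite inE ffunE; case: ifP => iU /=; first by rewrite eqxx.
    by rewrite eqn_leq ltnNge H2 andbF.
- move=> c; rewrite !inE => /andP [/andP [/okcP [H1 H2] _] /eqP HU].
  apply/ffunP => i; have [iU|iU] := boolP (i \in U); rewrite !ffunE ?iU ?(negPf iU) //.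
  by apply/val_inj => /=; move: iU; rewrite -HU inE => /eqP.
- move=> c; rewrite !inE => /andP [/okcP [H1 H2] _].
  apply/ffunP => i; have [iU|iU] := boolP (i \in U); rewrite !ffunE ?iU ?(negPf iU) //.
  by apply/val_inj => /=; apply/esym/eqP; rewrite eqn0Ngt H1 inE iU.
Qed.

Lemma cnt0 (V : {set I}) (P : {ffun I -> 'I_K} -> bool) : 0 < K ->
  (forall c, V = set0 -> P c) ->
  #|[set c | okc V 0 c && P c]| = (V == set0).
Proof.
move=> h0 HP; pose o0 := Ordinal h0.
have [V0|Vn] := eqVneq V set0.
  transitivity 1 => //.
  rewrite -(cards1 ([ffun => o0] : {ffun I -> 'I_K})); apply: eq_card => c; rewrite !inE HP // andbT.
  apply/okcP/eqP => [[_ H2]|->]; last by split => i; rewrite ffunE // V0 inE.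
  by apply/ffunP => i; apply/val_inj; rewrite ffunE /=; apply/eqP; rewrite -leqn0.
transitivity 0 => //.
apply/eqP; rewrite cards_eq0; apply/eqP/setP => c; rewrite !inE.
apply/negP => /andP [/okcP [H1 H2] _].
case/set0Pn: Vn => i; rewrite -H1; have := H2 i; rewrite leqn0 => /eqP ->.
by [].
Qed.

Lemma St0 (V : {set I}) : 0 < K -> St V 0 = (V == set0).
Proof.
move=> h0; apply: cnt0 => // c ->; apply/strictcP => i j; by rewrite inE.
Qed.

Lemma Wk0 (V : {set I}) : 0 < K -> Wk V 0 = (V == set0).
Proof.
move=> h0; apply: cnt0 => // c ->; apply/weakcP => i j; by rewrite inE.
Qed.

Lemma WkB_set0 (V : {set I}) b : WkB V set0 b = Wk V b.
Proof.
apply: eq_card => c; rewrite !inE.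
have -> : [forall t in set0, c t < b] by apply/forall_inP => t; rewrite inE.
by rewrite andbT.
Qed.

Definition wf_rel := forall X : {set I}, X != set0 ->
  exists2 v, v \in X & forall w, w \in X -> ~~ r v w.

Lemma WkB_sinks (V : {set I}) m : wf_rel -> WkB V (sinks V) m.+1 = Wk V m.
Proof.
move=> wf; apply: eq_card => c; rewrite !inE.
apply/idP/idP.
  case/and3P => /okcP [H1 H2] /weakcP Hw /forall_inP Hc.
  rewrite andbC; apply/andP; split; first by apply/weakcP.
  apply/okcP; split => // i.
  pose X := [set i in V | (c i : nat) == m.+1].
  have X0 : X = set0.
    apply/eqP; apply/negPn/negP => /wf [v]; rewrite inE => /andP [vV /eqP cv] Hv.
    have : v \in sinks V.
      apply/sinksP; split => // w wV; apply/negP => rvw.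
      have := Hw v w vV wV rvw; rewrite cv => cw.
      have cw' : (c w : nat) == m.+1 by rewrite eqn_leq cw H2.
      by have := Hv w; rewrite inE wV cw' => /(_ isT); rewrite rvw.
    by move/Hc; rewrite cv ltnn.
  rewrite leqNgt; apply/negP => hi.
  have ci : (c i : nat) == m.+1 by rewrite eqn_leq hi H2.
  have iV : i \in V by rewrite -H1 (eqP ci).
  have : i \in X by rewrite inE iV ci.
  by rewrite X0 inE.
case/andP => /okcP [H1 H2] Hw; apply/and3P; split => //.
  by apply/okcP; split => // i; apply: leqW.
by apply/forall_inP => t _; rewrite ltnS.
Qed.

Lemma WkB_step (V T : {set I}) v b : 0 < b -> b < K -> v \in sinks V -> v \notin T ->
  WkB V T b = WkB V (v |: T) b + WkB (V :\ v) T b.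
Proof.
move=> b0 hb vS vT.
have h0 : 0 < K by apply: leq_ltn_trans hb.
pose o0 := Ordinal h0; pose ob := Ordinal hb.
have [vV vsink] := sinksP _ _ vS.
rewrite /WkB -(cardsID [set c : {ffun I -> 'I_K} | c v < b]); congr (_ + _).
  apply: eq_card => c; rewrite !inE.
  case: (okc V b c) (weakc V c) => //= [] [] //=.
  apply/andP/forall_inP => [[/forall_inP H cv] t|H].
    by rewrite !inE => /orP [/eqP ->|/H].
  by split; [apply/forall_inP => t tT; apply: H; rewrite inE tT orbT | apply: H; rewrite setU11].
apply: (card_bij (f := fun c : {ffun I -> 'I_K} => [ffun i => if i == v then o0 else c i])
                 (g := fun c : {ffun I -> 'I_K} => [ffun i => if i == v then ob else c i])).
- move=> c; rewrite !inE => /andP [cv /and3P [/okcP [H1 H2] /weakcP Hw /forall_inP Hc]].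
  apply/and3P; split.
  + apply/okcP; split => i; rewrite ffunE; have [iv|iv] := eqVneq i v.
    * by rewrite iv !inE eqxx.
    * by rewrite !inE iv H1.
    * by [].
    * exact: H2.
  + apply/weakcP => i j; rewrite !inE !ffunE => /andP [iv iV] /andP [jv jV].
    by rewrite (negPf iv) (negPf jv); exact: Hw.
  + apply/forall_inP => t tT; rewrite ffunE; case: eqP => [tv|_]; last exact: Hc.
    by move: vT; rewrite -tv tT.
- move=> c; rewrite !inE => /and3P [/okcP [H1 H2] /weakcP Hw /forall_inP Hc].
  rewrite ffunE eqxx /= ltnn /=; apply/and3P; split.
  + apply/okcP; split => i; rewrite ffunE; have [iv|iv] := eqVneq i v.
    * by rewrite iv vV.
    * by rewrite H1 !inE iv.
    * by [].
    * exact: H2.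
  + apply/weakcP => i j iV jV rij; rewrite !ffunE.
    have [iv|iv] := eqVneq i v; first by move: (vsink j jV); rewrite -iv rij.
    have [jv|jv] := eqVneq j v; first exact: H2.
    by apply: Hw => //; rewrite !inE ?iv ?jv.
  + apply/forall_inP => t tT; rewrite ffunE; case: eqP => [tv|_]; last exact: Hc.
    by move: vT; rewrite -tv tT.
- move=> c; rewrite !inE => /andP [cv /and3P [/okcP [H1 H2] _ _]].
  apply/ffunP => i; rewrite !ffunE; have [iv|iv] := eqVneq i v; rewrite ?iv //.
  by apply/val_inj => /=; apply/eqP; rewrite eqn_leq H2 leqNgt cv.
- move=> c; rewrite !inE => /and3P [/okcP [H1 H2] _ _].
  apply/ffunP => i; rewrite !ffunE; have [iv|iv] := eqVneq i v; rewrite ?iv //.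
  by apply/val_inj => /=; apply/esym/eqP; rewrite eqn0Ngt H1 !inE eqxx.
Qed.
End Count.

End PartB.

Section PartC.

Lemma sum_subset_split (T : finType) (F : {set T} -> rat) (v : T) (T0 : {set T}) :
  v \notin T0 ->
  (\sum_(U : {set T} | U \subset v |: T0) F U =
   \sum_(U : {set T} | U \subset T0) F U + \sum_(U : {set T} | U \subset T0) F (v |: U))%R.
Proof.
move=> vT0.
rewrite (bigID (fun U : {set T} => v \in U)) /= addrC; congr (_ + _)%R.
  apply: eq_bigl => U; apply/andP/idP => [[sU vU]|sU].
    apply/subsetP => x xU; move/subsetP: sU => /(_ x xU); rewrite !inE.
    by case/orP => // /eqP xv; move: vU; rewrite -xv xU.
  split; first by apply: (subset_trans sU); apply: subsetUr.
  by apply/negP => /(subsetP sU); rewrite (negPf vT0).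
rewrite (reindex_onto (fun U : {set T} => v |: U) (fun U => U :\ v)) /=; last first.
  by move=> U /andP [_ vU]; rewrite setD1K.
apply: eq_bigl => U; rewrite setU11 andbT.
apply/andP/idP => [[sU /eqP eU]|sU].
  rewrite -eU; apply/subsetP => x; rewrite !inE => /andP [xv]; rewrite (negPf xv) /= => xU.
  by move/subsetP: sU => /(_ x); rewrite !inE (negPf xv) xU => /(_ isT).
split; first by apply: setUS.
apply/eqP/setP => x; rewrite !inE; case: eqP => [->|] //=.
by apply/esym/negP => /(subsetP sU); rewrite (negPf vT0).
Qed.

Lemma sinksD1 (I : finType) (r : rel I) (V : {set I}) v t :
  t \in sinks r V -> t != v -> t \in sinks r (V :\ v).
Proof.
move=> /sinksP [tV ts] tv; apply/sinksP; split; first by rewrite !inE tv.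
by move=> w; rewrite !inE => /andP [_ /ts].
Qed.

Lemma signed_Wk (I : finType) (r : rel I) K b : 0 < b -> b < K ->
  forall (T V : {set I}), T \subset sinks r V ->
  (\sum_(U : {set I} | U \subset T) (-1 : rat) ^+ #|U| * (Wk r K (V :\: U) b)%:R
     = (WkB r K V T b)%:R)%R.
Proof.
move=> b0 bK T.
move: {2}#|T| (erefl #|T|) => n; elim: n T => [|n IH] T cT V sT.
  move/eqP: cT; rewrite cards_eq0 => /eqP ->.
  rewrite (big_pred1 set0); last by move=> U; rewrite /= subset0.
  by rewrite cards0 expr0 mul1r setD0 WkB_set0.
have : T != set0 by rewrite -cards_eq0 cT.
case/set0Pn => v vT.
have vS : v \in sinks r V by apply: (subsetP sT).
pose T0 := T :\ v.
have vT0 : v \notin T0 by rewrite !inE eqxx.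
have eT : T = v |: T0 by rewrite setD1K.
have cT0 : #|T0| = n by move: cT; rewrite (cardsD1 v) vT add1n => [[]].
have sT0 : T0 \subset sinks r V by apply: subset_trans sT; apply: subD1set.
have sT0' : T0 \subset sinks r (V :\ v).
  apply/subsetP => t tT0; apply: sinksD1; first exact: (subsetP sT0).
  by apply: contraNneq vT0 => <-.
rewrite eT sum_subset_split // IH // (WkB_step (T := T0) b0 bK vS vT0) natrD.
have -> : (\sum_(U : {set I} | U \subset T0)
     (-1 : rat) ^+ #|v |: U| * (Wk r K (V :\: (v |: U)) b)%:R =
   - \sum_(U : {set I} | U \subset T0) (-1 : rat) ^+ #|U| * (Wk r K ((V :\ v) :\: U) b)%:R)%R.
  rewrite -sumrN; apply: eq_bigr => U sU.
  have vU : v \notin U by apply: contra vT0; apply: (subsetP sU).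
  by rewrite cardsU1 vU exprS mulN1r mulNr setDDl.
by rewrite IH // addrK.
Qed.

Lemma signed_Wk_sinks (I : finType) (r : rel I) K m : wf_rel r -> m.+1 < K ->
  forall V : {set I},
  (\sum_(U : {set I} | U \subset sinks r V) (-1 : rat) ^+ #|U| * (Wk r K (V :\: U) m.+1)%:R
     = (Wk r K V m)%:R)%R.
Proof.
move=> wf mK V; rewrite signed_Wk // WkB_sinks //.
Qed.

End PartC.

Section PartD.
Local Open Scope ring_scope.

Lemma ev_nil x : ev [::] x = 0.
Proof. by rewrite /ev big_nil. Qed.

Lemma ev_big (T : finType) (P : pred T) (f : T -> seq (rat * nat)) x :
  ev (\big[cat/[::]]_(i | P i) f i) x = \sum_(i | P i) ev (f i) x.
Proof. exact: (big_morph (fun s => ev s x) (fun a b => ev_cat a b x) (ev_nil x)). Qed.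

Lemma ev_cons a s x : ev (a :: s) x = a.1 * binr x a.2 + ev s x.
Proof. by rewrite /ev big_cons. Qed.


Section Main.
Variables (I : finType) (r : rel I).
Hypothesis wf : wf_rel r.

Definition Inv (V : {set I}) (s : seq (rat * nat)) :=
  (forall m K, (m < K)%N -> ev s m%:R = (St r K V m)%:R) /\
  (forall m K, (m < K)%N -> (-1) ^+ #|V| * ev s (- m%:R) = (Wk r K V m)%:R).

Lemma cardDlt (V U : {set I}) : U != set0 -> U \subset V -> (#|V :\: U| < #|V|)%N.
Proof.
move=> U0 UV; rewrite -(cardsID U V) (setIidPr UV) -{1}(add0n #|V :\: U|) ltn_add2r.
by rewrite card_gt0.
Qed.

Lemma cardDsign (V U : {set I}) : U \subset V ->
  (-1 : rat) ^+ #|V| = (-1) ^+ #|U| * (-1) ^+ #|V :\: U|.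
Proof. by move=> UV; rewrite -exprD -(cardsID U V) (setIidPr UV). Qed.

Lemma main_step (V : {set I}) :
  (forall V' : {set I}, (#|V'| < #|V|)%N -> exists s, Inv V' s) -> exists s, Inv V s.
Proof.
move=> IH.
pose cond (U : {set I}) := (U != set0) && (U \subset sinks r V).
have : forall U : {set I}, exists s, cond U -> Inv (V :\: U) s.
  move=> U; have [cU|cU] := boolP (cond U); last by exists [::].
  case/andP: cU => U0 US.
  have [s Hs] := IH (V :\: U) (cardDlt U0 (subset_trans US (sinks_sub r V))).
  by exists s.
case/fin_all_exists => sf Hsf.
pose s := ((V == set0)%:R, 0%N) :: \big[cat/[::]]_(U | cond U) shift (sf U).
have E0 : ev s 0 = (V == set0)%:R.
  rewrite ev_cons ev_big big1 ?addr0 /= ?binr0 ?mulr1 //.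
  by move=> U _; rewrite ev_shift0.
have Erec x : ev s (x + 1) - ev s x = \sum_(U | cond U) ev (sf U) x.
  rewrite !ev_cons !ev_big /= !binr0 opprD addrACA subrr add0r -sumrB.
  by apply: eq_bigr => U _; rewrite ev_shift.
have sumsplit (F : {set I} -> rat) :
    \sum_(U : {set I} | U \subset sinks r V) F U = F set0 + \sum_(U | cond U) F U.
  rewrite (bigD1 set0) ?sub0set //=; congr (_ + _).
  by apply: eq_bigl => U; rewrite /cond andbC.
exists s; split.
  elim => [|m IHm] K mK.
    by rewrite E0 St0.
  rewrite -natr1 -(subrK (ev s m%:R) (ev s (m%:R + 1))) Erec (IHm K) ?(ltnW mK) //.
  rewrite St_rec // natr_sum sumsplit setD0 addrC; congr (_ + _).
  apply: eq_bigr => U cU; have [H _] := Hsf U cU.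
  by rewrite (H m K) // ltnW.
elim => [|m IHm] K mK.
  rewrite oppr0 E0 Wk0 //; have [->|_] := eqVneq V set0.
    by rewrite cards0 expr0 mul1r.
  by rewrite mulr0.
have e : - m%:R = - (m.+1%:R) + 1 :> rat by rewrite -natr1 opprD addrNK.
have := Erec (- m.+1%:R); rewrite -e => H.
have -> : ev s (- m.+1%:R) = ev s (- m%:R) - \sum_(U | cond U) ev (sf U) (- m.+1%:R).
  by rewrite -H opprB addrC subrK.
rewrite mulrBr (IHm K) ?(ltnW mK) //.
have := signed_Wk_sinks wf mK V.
rewrite sumsplit setD0 cards0 expr0 mul1r => <-.
rewrite mulr_sumr [X in _ - X](eq_bigr (fun U : {set I} => (-1) ^+ #|U| * (Wk r K (V :\: U) m.+1)%:R)) ?addrK //.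
move=> U cU; have [_ H2] := Hsf U cU.
case/andP: cU => _ US.
by rewrite (cardDsign (subset_trans US (sinks_sub r V))) -mulrA (H2 m.+1 K).
Qed.

Lemma main_dag (V : {set I}) : exists s, Inv V s.
Proof.
move: {2}#|V| (leqnn #|V|) => n; elim: n V => [|n IHn] V cV; apply: main_step => V' hV'.
  by move: (leq_trans hV' cV).
by apply: IHn; rewrite -ltnS (leq_trans hV' cV).
Qed.
End Main.

End PartD.

Section PartE.

Section Hyp.
Variables (I E : finType) (edge : E -> {set I}).

Definition rs (s : {ffun E -> I}) : rel I :=
  [rel i j | [exists e, [&& s e == j, i \in edge e & i != j]]].

Lemma rsP (s : {ffun E -> I}) (i j : I) : reflect (exists e, [/\ s e = j, i \in edge e & i != j]) (rs s i j).
Proof.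
apply: (iffP existsP) => [[e /and3P [/eqP ? ? ?]]|[e [? ? ?]]]; exists e => //.
by apply/and3P; split => //; apply/eqP.
Qed.

Lemma strict_acyclic (s : {ffun E -> I}) m (c : {ffun I -> 'I_m}) :
  (forall i j, rs s i j -> c i < c j) -> acyclic edge s.
Proof.
move=> Hs [l [f [l0 Hf]]].
pose a k := (c (s (f (k %% l))) : nat).
have step k : a k < a k.+1.
  rewrite /a; have := Hf (k %% l) (ltn_pmod k l0).
  rewrite -addn1 modnDml addn1 !inE => /andP [ne ine].
  by apply: Hs; apply/rsP; exists (f (k.+1 %% l)); split => //; rewrite eq_sym.
have grow k : a 0 + k <= a k.
  elim: k => [|k IH]; first by rewrite addn0.
  by rewrite addnS; apply: leq_ltn_trans IH (step k).
have := grow l; rewrite /a modnn mod0n.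
by rewrite -{2}(addn0 (c (s (f 0)))) leq_add2l leqn0 => /eqP l0'; move: l0; rewrite l0'.
Qed.

Lemma acyclic_wf (s : {ffun E -> I}) : acyclic edge s -> wf_rel (rs s).
Proof.
move=> ac X X0.
have [/exists_inP [v vX /forall_inP H]|H] := boolP [exists v in X, [forall w in X, ~~ rs s v w]].
  by exists v.
exfalso; apply: ac.
have Hs v : v \in X -> exists2 w, w \in X & rs s v w.
  move=> vX; move: H; rewrite negb_exists_in => /forall_inP /(_ v vX).
  by rewrite negb_forall_in => /exists_inP [w wX]; rewrite negbK; exists w.
pose g v := odflt v [pick w in X | rs s v w].
have gP v : v \in X -> g v \in X /\ rs s v (g v).
  move=> vX; rewrite /g; case: pickP => [w /andP [wX rw]|] //=.
  by case: (Hs v vX) => w wX rw /(_ w); rewrite wX rw.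
case/set0Pn: X0 => v0 v0X.
pose x k := iter k g v0.
have xX k : x k \in X by elim: k => [|k IH] //=; case: (gP _ IH).
have xS k : rs s (x k) (x k.+1) by case: (gP _ (xX k)).
pose F (k : 'I_#|I|.+1) := x k.
have : ~~ injectiveb F.
  apply/negP => /injectiveP /leq_card; rewrite card_ord ltnn //.
case/injectivePn => i [j ij Fij].
have [a [b [ab xab]]] : exists a b, a < b /\ x a = x b.
  case: (ltngtP i j) => [lt|lt|eq]; first by exists i, j.
    by exists j, i.
  by move: ij; rewrite (ord_inj eq) eqxx.
pose l := b - a.
have l0 : 0 < l by rewrite subn_gt0.
pose y k := x (a + k).
have yl k : y (k + l) = y k.
  rewrite /y; have -> : a + (k + l) = k + b by rewrite /l addnCA subnKC // ltnW.
  by rewrite /x iterD -/(x b) -xab /x -iterD addnC.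
have ymod k : y (k %% l) = y k.
  rewrite {2}(divn_eq k l); elim: (k %/ l) => [|q IH]; first by rewrite mul0n add0n.
  by rewrite mulSn -addnA addnC yl.
have yS k : g (y k) = y k.+1 by rewrite /y addnS.
have ee : exists e : E, true.
  case/rsP: (xS 0) => e _; by exists e.
case: ee => e0 _.
pose h v := odflt e0 [pick e | [&& s e == g v, v \in edge e & v != g v]].
have hP k : [/\ s (h (y k)) = y k.+1, y k \in edge (h (y k)) & y k != y k.+1].
  rewrite /h; case: pickP => [e /and3P [/eqP se ye ne]|] /=.
    by rewrite se yS -yS.
  case/rsP: (xS (a + k)) => e [se ine ne] /(_ e).
  by rewrite -/(y k) -addnS -/(y k.+1) -yS in se ine ne *; rewrite se eqxx ine ne.
exists l, (fun k => h (y k)); split => // k _.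
rewrite ymod; case: (hP k) => -> _ _; case: (hP k.+1) => -> ine ne.
by rewrite in_setD1 ne ine.
Qed.

Definition strictb (s : {ffun E -> I}) m (c : {ffun I -> 'I_m}) :=
  [forall i, forall j, rs s i j ==> (c i < c j)].
Definition weakb (s : {ffun E -> I}) m (c : {ffun I -> 'I_m}) :=
  [forall i, forall j, rs s i j ==> (c i <= c j)].

Lemma strictbP s m (c : {ffun I -> 'I_m}) :
  reflect (forall i j, rs s i j -> c i < c j) (strictb s c).
Proof.
apply: (iffP forallP) => [H i j|H i]; first by move/forallP: (H i) => /(_ j) /implyP.
by apply/forallP => j; apply/implyP; apply: H.
Qed.

Lemma weakbP s m (c : {ffun I -> 'I_m}) :
  reflect (forall i j, rs s i j -> c i <= c j) (weakb s c).
Proof.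
apply: (iffP forallP) => [H i j|H i]; first by move/forallP: (H i) => /(_ j) /implyP.
by apply/forallP => j; apply/implyP; apply: H.
Qed.

Lemma emax_ge m (c : {ffun I -> 'I_m}) e i : i \in edge e -> c i <= emax edge c e.
Proof. by move=> ie; rewrite /emax; apply: (@leq_bigmax_cond _ (fun j => j \in edge e)). Qed.

Lemma compat_weak s m (c : {ffun I -> 'I_m}) : heading edge s ->
  compatible edge c s <-> weakb s c.
Proof.
move=> hs; split => [H|/weakbP H e].
  apply/weakbP => i j /rsP [e [<- ie _]]; rewrite H; exact: emax_ge.
apply/eqP; rewrite eqn_leq emax_ge ?hs //=.
apply/bigmax_leqP => i ie; have [->|ne] := eqVneq i (s e) => //.
by apply: H; apply/rsP; exists e.
Qed.

Definition argset m (c : {ffun I -> 'I_m}) e :=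
  [set i in edge e | (c i : nat) == emax edge c e].

Lemma argset_strict s m (c : {ffun I -> 'I_m}) e : heading edge s -> strictb s c ->
  argset c e = [set s e].
Proof.
move=> hs /strictbP H.
have ce : (c (s e) : nat) = emax edge c e.
  apply/eqP; rewrite eqn_leq emax_ge ?hs //=.
  apply/bigmax_leqP => i ie; have [->|ne] := eqVneq i (s e) => //.
  by apply: ltnW; apply: H; apply/rsP; exists e.
apply/setP => i; rewrite !inE; apply/andP/eqP => [[ie /eqP ci]|->].
  apply/eqP; apply/negPn/negP => ne.
  have := H i (s e); rewrite ci -ce ltnn; move=> HH; apply: notF; apply: HH; apply/rsP; exists e; split => //.
by rewrite hs ce.
Qed.

Lemma proper_strict s m (c : {ffun I -> 'I_m}) : heading edge s -> strictb s c ->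
  proper_coloring edge c.
Proof.
move=> hs Hs; apply/forallP => e.
by have := argset_strict e hs Hs; rewrite /argset => ->; rewrite cards1.
Qed.

Section SC.
Variable d : E -> I.
Definition sc m (c : {ffun I -> 'I_m}) : {ffun E -> I} :=
  [ffun e => odflt (d e) [pick i in argset c e]].

Lemma sc_eq s m (c : {ffun I -> 'I_m}) : heading edge s -> strictb s c -> sc c = s.
Proof.
move=> hs Hs; apply/ffunP => e; rewrite ffunE (argset_strict e hs Hs).
by rewrite pick_set1.
Qed.

Lemma sc_proper m (c : {ffun I -> 'I_m}) : proper_coloring edge c ->
  heading edge (sc c) /\ strictb (sc c) c.
Proof.
move=> /forallP Hp.
have Ha e : argset c e = [set sc c e].
  case/cards1P: (Hp e) => x Hx.
  by rewrite ffunE /argset Hx pick_set1.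
split.
  by move=> e; have := set11 (sc c e); rewrite -Ha inE => /andP [].
apply/strictbP => i j /rsP [e [<- ie ne]].
have := set11 (sc c e); rewrite -Ha inE => /andP [_ /eqP ->].
rewrite ltn_neqAle emax_ge // andbT; apply/negP => /eqP ci.
have : i \in argset c e by rewrite inE ie ci eqxx.
by rewrite Ha inE (negPf ne).
Qed.
End SC.

Lemma card_pairs (T1 T2 : finType) (P : pred T1) (Q : T1 -> pred T2) :
  #|[set p : T1 * T2 | P p.1 && Q p.1 p.2]| = \sum_(a | P a) #|[set b | Q a b]|.
Proof.
rewrite -sum1dep_card -(pair_big_dep P Q (fun _ _ => 1)).
by apply: eq_bigr => a _; rewrite sum1dep_card.
Qed.

Definition AHb (s : {ffun E -> I}) : bool := `[< heading edge s /\ acyclic edge s >].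

Lemma n_proper_sum (d : E -> I) m :
  n_proper edge m = \sum_(s | AHb s) #|[set c : {ffun I -> 'I_m} | strictb s c]|.
Proof.
rewrite -card_pairs /n_proper.
apply: (card_bij (f := fun c : {ffun I -> 'I_m} => (sc d c, c)) (g := @snd {ffun E -> I} {ffun I -> 'I_m})).
- move=> c; rewrite !inE => /(sc_proper d) [hs Hs]; rewrite /= Hs andbT.
  apply/asboolP; split => //; exact: (strict_acyclic (strictbP _ _ Hs)).
- move=> [s c]; rewrite !inE /= => /andP [/asboolP [hs _] Hs].
  exact: proper_strict hs Hs.
- by [].
- move=> [s c]; rewrite !inE /= => /andP [/asboolP [hs _] Hs].
  by rewrite (sc_eq d hs Hs).
Qed.

Lemma n_pairs_sum m :
  n_pairs edge m = \sum_(s | AHb s) #|[set c : {ffun I -> 'I_m} | weakb s c]|.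
Proof.
rewrite -card_pairs /n_pairs; apply: eq_card => [[s c]]; rewrite !inE /=.
apply/asboolP/andP => [[hs [ac co]]|[/asboolP [hs ac] w]].
  by split; [apply/asboolP|apply/compat_weak].
by split => //; split => //; apply/compat_weak.
Qed.
End Hyp.

End PartE.

Section PartF.

Lemma bridge (I : finType) (r : rel I) (cmp : nat -> nat -> bool) k :
  (forall a b, cmp a.+1 b.+1 = cmp a b) ->
  #|[set c : {ffun I -> 'I_k.+1} | [forall i, forall j, r i j ==> cmp (c i) (c j)]]| =
  #|[set c : {ffun I -> 'I_k.+2} | okc [set: I] k.+1 c &&
       [forall i, forall j, [&& i \in [set: I], j \in [set: I] & r i j] ==> cmp (c i) (c j)]]|.
Proof.
move=> hcmp.
apply: (card_bij (f := fun c : {ffun I -> 'I_k.+1} => [ffun i => lift ord0 (c i)])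
                 (g := fun c : {ffun I -> 'I_k.+2} => [ffun i => inord (c i).-1])).
- move=> c; rewrite !inE => /forallP H; apply/andP; split.
    by apply/okcP; split => i; rewrite ffunE lift0 // inE.
  apply/forallP => i; apply/forallP => j; apply/implyP; rewrite !inE /= => rij.
  by rewrite !ffunE !lift0 hcmp; move/forallP: (H i) => /(_ j) /implyP; apply.
- move=> c; rewrite !inE => /andP [/okcP [H1 H2] /forallP H].
  have cp i : 0 < c i by rewrite H1 inE.
  have hv i : (inord (c i).-1 : 'I_k.+1) = (c i).-1 :> nat.
    by rewrite inordK // prednK.
  apply/forallP => i; apply/forallP => j; apply/implyP => rij.
  rewrite !ffunE !hv -hcmp !prednK //.
  by move/forallP: (H i) => /(_ j) /implyP; rewrite !inE; apply.
- move=> c _; apply/ffunP => i; rewrite !ffunE.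
  by rewrite /= add0n inord_val.
- move=> c; rewrite !inE => /andP [/okcP [H1 H2] _].
  apply/ffunP => i; have cp : 0 < c i by rewrite H1 inE.
  rewrite !ffunE; apply/val_inj; rewrite /=. by rewrite /bump leq0n add1n inordK prednK.
Qed.


Local Open Scope ring_scope.

Lemma poly_eq_nat (p q : {poly rat}) :
  (forall m : nat, (0 < m)%N -> p.[m%:R] = q.[m%:R]) -> p = q.
Proof.
move=> H; apply/eqP; rewrite -subr_eq0; apply/negPn/negP => nz.
have := @max_poly_roots _ (p - q) [seq (i.+1)%:R | i <- iota 0 (size (p - q))] nz.
rewrite size_map size_iota ltnn => h; suff : false by []; apply: h.
  apply/allP => x /mapP [i _ ->]; rewrite /root hornerD hornerN H // subrr.
  by [].
rewrite map_inj_uniq ?iota_uniq // => i j /eqP; by rewrite eqr_nat => /eqP [->].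
Qed.

End PartF.

Unset Implicit Arguments.
Local Open Scope ring_scope.

Theorem mainTheorem10 (I E : finType) (edge : E -> {set I})
  (Hne : forall e : E, edge e != set0) :
  (exists chi : {poly rat}, forall m : nat, (0 < m)%N ->
       chi.[m%:R] = (n_proper edge m)%:R) /\
  (forall chi : {poly rat},
     (forall m : nat, (0 < m)%N -> chi.[m%:R] = (n_proper edge m)%:R) ->
     (forall m : nat, (0 < m)%N ->
        (-1) ^+ #|I| * chi.[- m%:R] = (n_pairs edge m)%:R) /\
     (-1) ^+ #|I| * chi.[-1] = (n_acyclic_headings edge)%:R).
Proof.
have [d hd] : exists d : E -> I, forall e, d e \in edge e.
  apply: (@fin_all_exists E (fun _ => I) (fun e i => i \in edge e)) => e.
  by case/set0Pn: (Hne e) => i ie; exists i.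
have : forall s : {ffun E -> I}, exists sq, AHb edge s -> Inv (rs edge s) [set: I] sq.
  move=> s; have [h|h] := boolP (AHb edge s); last by exists [::].
  case/asboolP: (h) => _ ac.
  have [sq Hs] := main_dag (acyclic_wf ac) [set: I].
  by exists sq.
case/fin_all_exists => sf Hsf.
pose chi0 := \sum_(s | AHb edge s) topoly (sf s).
have Hpos k : chi0.[k.+1%:R] = (n_proper edge k.+1)%:R.
  rewrite horner_sum (n_proper_sum edge d) natr_sum; apply: eq_bigr => s hs.
  have [H1 _] := Hsf s hs; rewrite topolyE (H1 k.+1 k.+2) //.
  congr (_%:R); symmetry; exact: (@bridge I (rs edge s) (fun a b => (a < b)%N) k (fun a b => erefl)).
have Hneg k : (-1) ^+ #|I| * chi0.[- k.+1%:R] = (n_pairs edge k.+1)%:R.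
  rewrite horner_sum mulr_sumr n_pairs_sum natr_sum; apply: eq_bigr => s hs.
  have [_ H2] := Hsf s hs; rewrite topolyE -cardsT (H2 k.+1 k.+2) //.
  congr (_%:R); symmetry; exact: (@bridge I (rs edge s) (fun a b => (a <= b)%N) k (fun a b => erefl)).
split; first by exists chi0 => -[|k] // _; exact: Hpos.
move=> chi Hchi.
have -> : chi = chi0.
  apply: poly_eq_nat => -[|k] // _; by rewrite Hchi // Hpos.
split; first by move=> -[|k] // _; exact: Hneg.
have -> : n_acyclic_headings edge = n_pairs edge 1.
  rewrite n_pairs_sum /n_acyclic_headings -sum1dep_card; apply: eq_bigr => s hs.
  symmetry; transitivity #|[set: {ffun I -> 'I_1}]|; last by rewrite cardsT card_ffun card_ord exp1n.
  apply: eq_card => c; rewrite !inE; apply/weakbP => i j _.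
  by case: (c i) => [[|n]].
exact: Hneg 0%N.
Qed.
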